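(* Let $n_i:=2^{2^i}$ and $t_n:=1/n$. If $100\le i<j$ then $f_{n_i}(t_{n_j})=0$ and $B_{n_j}(f_{n_i},t_{n_j})\ge -\frac{9}{8n_j}$.
   Context: Nodes: $x_{k,n}:=2k/n-1$, $k=0,\dots,n$. $B_n(f,x):=N_n(f,x)/D_n(x)$ for $x$ not a node, $B_n(f,x_{k,n}):=f(x_{k,n})$, with $N_n(f,x)=\sum_{k=0}^n(-1)^k\frac{f(x_{k,n})}{x-x_{k,n}}$, $D_n(x)=\sum_{k=0}^n(-1)^k\frac{1}{x-x_{k,n}}$. For $m$ such that $\sqrt m$ is an integer multiple of $4$, define $f_m:\mathbb{R}\to\mathbb{R}$ by: $f_m(x)=0$ for $x<1/m$ or $x\ge(\sqrt m-3)/m$; $f_m(x)=x-1/m$ for $1/m\le x<2/m$; $f_m(x)=\frac{4p+3}{m}-x$ for $0\le p\le\frac{\sqrt m-8}{4}$ and $\frac{4p+2}{m}\le x<\frac{4p+4}{m}$; $f_m(x)=x-\frac{4p+1}{m}$ for $1\le p\le\frac{\sqrt m-8}{4}$ and $\frac{4p}{m}\le x<\frac{4p+2}{m}$; $f_m(x)=x-\frac{\sqrt m-3}{m}$ for $\frac{\sqrt m-4}{m}\le x<\frac{\sqrt m-3}{m}$. *)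

(* Defs.v *)
From Stdlib Require Import Reals Lra ClassicalEpsilon.
Open Scope R_scope.

Definition dec (P : Prop) : bool :=
  if excluded_middle_informative P then true else false.

Definition pick_nat (P : nat -> Prop) : nat :=
  match excluded_middle_informative (exists p, P p) with
  | left H => proj1_sig (constructive_indefinite_description P H)
  | right _ => 0%nat
  end.

Definition node (n k : nat) : R := 2 * INR k / INR n - 1.

Definition Nn (n : nat) (f : R -> R) (x : R) : R :=
  sum_f_R0 (fun k => (-1) ^ k * f (node n k) / (x - node n k)) n.

Definition Dn (n : nat) (x : R) : R :=
  sum_f_R0 (fun k => (-1) ^ k / (x - node n k)) n.

Definition Bn (n : nat) (f : R -> R) (x : R) : R :=
  if dec (exists k : nat, (k <= n)%nat /\ x = node n k) then f x
  else Nn n f x / Dn n x.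

Definition dn_piece (m x : R) (p : nat) : Prop :=
  0 <= INR p <= (sqrt m - 8) / 4 /\ (4 * INR p + 2) / m <= x < (4 * INR p + 4) / m.

Definition up_piece (m x : R) (p : nat) : Prop :=
  1 <= INR p <= (sqrt m - 8) / 4 /\ (4 * INR p) / m <= x < (4 * INR p + 2) / m.

(* f_m (meant for m with sqrt m an integer multiple of 4) *)
Definition fm (m x : R) : R :=
  if dec (x < 1 / m \/ (sqrt m - 3) / m <= x) then 0
  else if dec (1 / m <= x < 2 / m) then x - 1 / m
  else if dec (exists p, dn_piece m x p) then
    (4 * INR (pick_nat (dn_piece m x)) + 3) / m - x
  else if dec (exists p, up_piece m x p) then
    x - (4 * INR (pick_nat (up_piece m x)) + 1) / m
  else if dec ((sqrt m - 4) / m <= x < (sqrt m - 3) / m) then x - (sqrt m - 3) / m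
  else 0.

Definition ni (i : nat) : nat := (2 ^ (2 ^ i))%nat.

Definition tn (n : nat) : R := 1 / INR n.

(* Main.v *)
Require Import Defs.
From Stdlib Require Import Reals Lra Lia ClassicalEpsilon.
Open Scope R_scope.

Lemma dec_true (P : Prop) : P -> dec P = true.
Proof. intro H. unfold dec. destruct (excluded_middle_informative P); [reflexivity| contradiction]. Qed.
Lemma dec_false (P : Prop) : ~P -> dec P = false.
Proof. intro H. unfold dec. destruct (excluded_middle_informative P); [contradiction|reflexivity]. Qed.

Lemma pick_spec (P : nat -> Prop) : (exists p, P p) -> P (pick_nat P).
Proof. intro H. unfold pick_nat. destruct (excluded_middle_informative (exists p, P p)) as [H'|H'].
 - exact (proj2_sig (constructive_indefinite_description P H')).
 - contradiction. Qed.

Lemma ld1 m a x : 0 < m -> a / m <= x -> a <= m * x.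
Proof. intros Hm H. replace a with (m * (a/m)) by (field; lra). apply Rmult_le_compat_l; lra. Qed.
Lemma ld2 m a x : 0 < m -> a <= m * x -> a / m <= x.
Proof. intros Hm H. replace x with ((m*x)/m) by (field; lra). unfold Rdiv.
  apply Rmult_le_compat_r; [left; apply Rinv_0_lt_compat; lra | lra]. Qed.
Lemma lt1 m a x : 0 < m -> x < a / m -> m * x < a.
Proof. intros Hm H. replace a with (m * (a/m)) by (field; lra). apply Rmult_lt_compat_l; lra. Qed.
Lemma lt2 m a x : 0 < m -> m * x < a -> x < a / m.
Proof. intros Hm H. replace x with ((m*x)/m) by (field; lra). unfold Rdiv.
  apply Rmult_lt_compat_r; [apply Rinv_0_lt_compat; lra | lra]. Qed.

Lemma nat_le_lt1 a b : INR a < INR b + 1 -> (a <= b)%nat.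
Proof. intro H. rewrite <- S_INR in H. apply INR_lt in H. lia. Qed.

Lemma dn_iff m K x p : 0 < m -> sqrt m = 4 * INR K + 8 ->
  (dn_piece m x p <-> (p <= K)%nat /\ 4 * INR p + 2 <= m * x < 4 * INR p + 4).
Proof.
  intros Hm Hs. unfold dn_piece. rewrite Hs. split.
  - intros [[_ H1] [H2 H3]]. split.
    + apply INR_le. lra.
    + split; [apply ld1 | apply lt1]; assumption.
  - intros [H1 [H2 H3]]. apply le_INR in H1. split; [split; [apply pos_INR | lra]|].
    split; [apply ld2 | apply lt2]; assumption.
Qed.

Lemma up_iff m K x p : 0 < m -> sqrt m = 4 * INR K + 8 ->
  (up_piece m x p <-> (1 <= p <= K)%nat /\ 4 * INR p <= m * x < 4 * INR p + 2).
Proof.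
  intros Hm Hs. unfold up_piece. rewrite Hs. split.
  - intros [[H0 H1] [H2 H3]]. split.
    + split; apply INR_le; simpl; lra.
    + split; [apply ld1 | apply lt1]; assumption.
  - intros [[H0 H1] [H2 H3]]. apply le_INR in H1. apply le_INR in H0. simpl in H0.
    split; [split; lra|].
    split; [apply ld2 | apply lt2]; assumption.
Qed.

Ltac br1_false Hm := rewrite dec_false; [| let C := fresh in intros [C|C];
   [apply (lt1 _ _ _ Hm) in C | apply (ld1 _ _ _ Hm) in C]; lra].
Ltac br2_false Hm := rewrite dec_false; [| let C := fresh in let D := fresh in intros [C D];
   apply (ld1 _ _ _ Hm) in C; apply (lt1 _ _ _ Hm) in D; lra].

Lemma H1f m K x : 0 < m -> sqrt m = 4 * INR K + 8 -> 1 <= m * x < 2 -> fm m x = x - 1/m.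
Proof.
  intros Hm Hs [A B]. pose proof (pos_INR K). unfold fm. rewrite Hs.
  br1_false Hm. rewrite dec_true; [reflexivity|].
  split; [apply ld2 | apply lt2]; assumption.
Qed.

Lemma H2f m K x p : 0 < m -> sqrt m = 4 * INR K + 8 -> (p <= K)%nat ->
  4 * INR p + 2 <= m * x < 4 * INR p + 4 -> fm m x = (4 * INR p + 3)/m - x.
Proof.
  intros Hm Hs Hp [A B]. pose proof (pos_INR K). pose proof (pos_INR p).
  assert (INR p <= INR K) by (apply le_INR; lia).
  unfold fm. rewrite Hs.
  br1_false Hm. br2_false Hm.
  rewrite dec_true. 2:{ exists p. apply (dn_iff m K); auto. }
  assert (Hq : dn_piece m x (pick_nat (dn_piece m x))) by (apply pick_spec; exists p; apply (dn_iff m K); auto).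
  apply (dn_iff m K) in Hq; auto. destruct Hq as [_ [C D]].
  assert (E : pick_nat (dn_piece m x) = p).
  { apply Nat.le_antisymm; apply nat_le_lt1; lra. }
  rewrite E. reflexivity.
Qed.

Lemma H3f m K x p : 0 < m -> sqrt m = 4 * INR K + 8 -> (1 <= p <= K)%nat ->
  4 * INR p <= m * x < 4 * INR p + 2 -> fm m x = x - (4 * INR p + 1)/m.
Proof.
  intros Hm Hs Hp [A B]. pose proof (pos_INR K). pose proof (pos_INR p).
  assert (INR p <= INR K) by (apply le_INR; lia).
  assert (1 <= INR p) by (replace 1 with (INR 1) by reflexivity; apply le_INR; lia).
  unfold fm. rewrite Hs.
  br1_false Hm. br2_false Hm.
  rewrite dec_false. 2:{ intros [p' Hp']. apply (dn_iff m K) in Hp'; auto.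
     destruct Hp' as [_ [C D]].
     assert (p' < p)%nat by (apply INR_lt; lra).
     assert (p <= p')%nat by (apply nat_le_lt1; lra). lia. }
  rewrite dec_true. 2:{ exists p. apply (up_iff m K); auto. }
  assert (Hq : up_piece m x (pick_nat (up_piece m x))) by (apply pick_spec; exists p; apply (up_iff m K); auto).
  apply (up_iff m K) in Hq; auto. destruct Hq as [_ [C D]].
  assert (E : pick_nat (up_piece m x) = p).
  { apply Nat.le_antisymm; apply nat_le_lt1; lra. }
  rewrite E. reflexivity.
Qed.

Lemma H4f m K x : 0 < m -> sqrt m = 4 * INR K + 8 ->
  4 * INR K + 4 <= m * x < 4 * INR K + 5 -> fm m x = x - (4 * INR K + 8 - 3)/m.
Proof.
  intros Hm Hs [A B]. pose proof (pos_INR K).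
  unfold fm. rewrite Hs.
  br1_false Hm. br2_false Hm.
  rewrite dec_false. 2:{ intros [p' Hp']. apply (dn_iff m K) in Hp'; auto.
     destruct Hp' as [Hp [C D]]. apply le_INR in Hp. lra. }
  rewrite dec_false. 2:{ intros [p' Hp']. apply (up_iff m K) in Hp'; auto.
     destruct Hp' as [[_ Hp] [C D]]. apply le_INR in Hp. lra. }
  rewrite dec_true; [reflexivity|].
  split; [apply ld2 | apply lt2]; lra.
Qed.

Lemma C0a m K x : 0 < m -> sqrt m = 4 * INR K + 8 -> m * x <= 1 -> fm m x = 0.
Proof.
  intros Hm Hs A. pose proof (pos_INR K). destruct (Rle_lt_or_eq_dec _ _ A) as [A'|A'].
  - unfold fm. rewrite dec_true; [reflexivity|]. left. apply lt2; lra.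
  - rewrite (H1f m K x); auto; [|lra]. replace x with (1/m) by (rewrite <- A'; field; lra). lra.
Qed.

Lemma C0b m K x : 0 < m -> sqrt m = 4 * INR K + 8 -> 4 * INR K + 5 <= m * x -> fm m x = 0.
Proof.
  intros Hm Hs A. unfold fm. rewrite dec_true; [reflexivity|]. right. rewrite Hs. apply ld2; lra.
Qed.

Lemma C1f m K x : 0 < m -> sqrt m = 4 * INR K + 8 -> 1 <= m * x <= 2 -> fm m x = x - 1/m.
Proof.
  intros Hm Hs [A B]. destruct (Rle_lt_or_eq_dec _ _ B) as [B'|B'].
  - apply (H1f m K); auto.
  - rewrite (H2f m K x 0); auto; [|lia|simpl; lra]. simpl.
    replace x with (2/m) by (rewrite <- B'; field; lra). field; lra.
Qed.

Lemma C2f m K x p : 0 < m -> sqrt m = 4 * INR K + 8 -> (p <= K)%nat ->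
  4 * INR p + 2 <= m * x <= 4 * INR p + 4 -> fm m x = (4 * INR p + 3)/m - x.
Proof.
  intros Hm Hs Hp [A B]. destruct (Rle_lt_or_eq_dec _ _ B) as [B'|B'].
  - apply (H2f m K); auto.
  - assert (Ex : x = (4 * INR p + 4)/m) by (rewrite <- B'; field; lra).
    destruct (Nat.eq_dec p K) as [->|Hne].
    + rewrite (H4f m K x); auto; [|lra]. rewrite Ex. field; lra.
    + rewrite (H3f m K x (S p)); auto; [|lia|rewrite S_INR; lra].
      rewrite S_INR, Ex. field; lra.
Qed.

Lemma C3f m K x p : 0 < m -> sqrt m = 4 * INR K + 8 -> (1 <= p <= K)%nat ->
  4 * INR p <= m * x <= 4 * INR p + 2 -> fm m x = x - (4 * INR p + 1)/m.
Proof.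
  intros Hm Hs Hp [A B]. destruct (Rle_lt_or_eq_dec _ _ B) as [B'|B'].
  - apply (H3f m K); auto.
  - assert (Ex : x = (4 * INR p + 2)/m) by (rewrite <- B'; field; lra).
    rewrite (H2f m K x p); auto; [|lia|lra]. rewrite Ex. field; lra.
Qed.

Lemma C4f m K x : 0 < m -> sqrt m = 4 * INR K + 8 ->
  4 * INR K + 4 <= m * x <= 4 * INR K + 5 -> fm m x = x - (4 * INR K + 5)/m.
Proof.
  intros Hm Hs [A B]. destruct (Rle_lt_or_eq_dec _ _ B) as [B'|B'].
  - rewrite (H4f m K); auto. replace (4 * INR K + 8 - 3) with (4 * INR K + 5) by ring. reflexivity.
  - assert (Ex : x = (4 * INR K + 5)/m) by (rewrite <- B'; field; lra).
    rewrite (C0b m K x); auto; [|lra]. rewrite Ex. field; lra.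
Qed.

Lemma divle_m m a b : 0 < m -> a <= b -> a / m <= b / m.
Proof. intros. unfold Rdiv. apply Rmult_le_compat_r; [left; apply Rinv_0_lt_compat|]; lra. Qed.

Lemma fm_bound m K x : 0 < m -> sqrt m = 4 * INR K + 8 -> -(1/m) <= fm m x <= 1/m.
Proof.
  intros Hm Hs. assert (0 < 1/m) by (apply Rdiv_lt_0_compat; lra).
  unfold fm, dec.
  destruct (excluded_middle_informative _) as [C|C]; [lra|].
  destruct (excluded_middle_informative _) as [C2|C2].
  { destruct C2 as [A B]. apply (ld1 _ _ _ Hm) in A. apply (lt1 _ _ _ Hm) in B.
    replace (x - 1/m) with ((m*x - 1)/m) by (field; lra).
    replace (-(1/m)) with ((-1)/m) by (field; lra). split; apply divle_m; lra. }
  destruct (excluded_middle_informative _) as [C3|C3].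
  { apply pick_spec in C3. apply (dn_iff m K) in C3; auto. destruct C3 as [_ [A B]].
    replace ((4 * INR (pick_nat (dn_piece m x)) + 3)/m - x) with
       ((4 * INR (pick_nat (dn_piece m x)) + 3 - m*x)/m) by (field; lra).
    replace (-(1/m)) with ((-1)/m) by (field; lra). split; apply divle_m; lra. }
  destruct (excluded_middle_informative _) as [C4|C4].
  { apply pick_spec in C4. apply (up_iff m K) in C4; auto. destruct C4 as [_ [A B]].
    replace (x - (4 * INR (pick_nat (up_piece m x)) + 1)/m) with
       ((m*x - (4 * INR (pick_nat (up_piece m x)) + 1))/m) by (field; lra).
    replace (-(1/m)) with ((-1)/m) by (field; lra). split; apply divle_m; lra. }
  destruct (excluded_middle_informative _) as [C5|C5]; [|lra].
  { destruct C5 as [A B]. apply (ld1 _ _ _ Hm) in A. apply (lt1 _ _ _ Hm) in B.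
    replace (x - (sqrt m - 3)/m) with ((m*x - (sqrt m - 3))/m) by (field; lra).
    replace (-(1/m)) with ((-1)/m) by (field; lra). split; apply divle_m; lra. }
Qed.

Lemma I4 : INR 4 = 4. Proof. simpl; ring. Qed.

Lemma aff m K q : 0 < m -> sqrt m = 4 * INR K + 8 ->
  exists a b, -1 <= a <= 1 /\ forall x, INR q <= m * x <= INR q + 1 -> fm m x = a * x + b.
Proof.
  intros Hm Hs. pose proof (pos_INR K).
  destruct (Nat.le_gt_cases (4*K+5) q) as [Hq|Hq].
  { exists 0, 0. split; [lra|]. intros x [A B]. rewrite (C0b m K x Hm Hs); [ring|].
    apply le_INR in Hq. rewrite plus_INR, mult_INR in Hq. simpl in Hq. lra. }
  destruct (Nat.eq_dec q (4*K+4)) as [->|Hq4].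
  { exists 1, (-((4 * INR K + 5)/m)). split; [lra|]. intros x [A B].
    rewrite plus_INR, mult_INR in A, B. simpl in A, B.
    rewrite (C4f m K x Hm Hs) by lra; ring. }
  destruct (Nat.eq_dec q 0) as [->|Hq0].
  { exists 0, 0. split; [lra|]. intros x [A B]. simpl in B. rewrite (C0a m K x Hm Hs) by lra; ring. }
  destruct (Nat.eq_dec q 1) as [->|Hq1].
  { exists 1, (-(1/m)). split; [lra|]. intros x [A B]. simpl in A, B. rewrite (C1f m K x Hm Hs) by lra; ring. }
  destruct (Nat.lt_ge_cases (q mod 4) 2) as [Hr|Hr].
  -
    set (p := (q / 4)%nat).
    assert (Hqp : (q = 4 * p + q mod 4)%nat) by (apply Nat.div_mod; lia).
    assert (1 <= p <= K)%nat by lia.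
    exists 1, (-((4 * INR p + 1)/m)). split; [lra|]. intros x [A B].
    assert (INR (q mod 4) <= 1) by (replace 1 with (INR 1) by reflexivity; apply le_INR; lia).
    assert (0 <= INR (q mod 4)) by apply pos_INR.
    rewrite Hqp, plus_INR, mult_INR, I4 in A, B.
    rewrite (C3f m K x p Hm Hs) by (auto; lra); ring.
  - set (p := (q / 4)%nat).
    assert (Hqp : (q = 4 * p + q mod 4)%nat) by (apply Nat.div_mod; lia).
    assert (Hm4 : (q mod 4 < 4)%nat) by (apply Nat.mod_upper_bound; lia).
    assert (p <= K)%nat by lia.
    exists (-1), ((4 * INR p + 3)/m). split; [lra|]. intros x [A B].
    assert (INR (q mod 4) <= 3) by (replace 3 with (INR 3) by (simpl; ring); apply le_INR; lia).
    assert (2 <= INR (q mod 4)) by (replace 2 with (INR 2) by (simpl; ring); apply le_INR; lia).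
    rewrite Hqp, plus_INR, mult_INR, I4 in A, B.
    rewrite (C2f m K x p Hm Hs) by (auto; lra); ring.
Qed.

Lemma sum_split (f : nat -> R) a b :
  sum_f_R0 f (a + S b) = sum_f_R0 f a + sum_f_R0 (fun k => f (S a + k)%nat) b.
Proof.
  induction b.
  - simpl. rewrite Nat.add_1_r. simpl. rewrite Nat.add_0_r. reflexivity.
  - replace (a + S (S b))%nat with (S (a + S b)) by lia. simpl. rewrite IHb.
    replace (S (a + S b)) with (S a + S b)%nat by lia. rewrite Rplus_assoc; reflexivity.
Qed.

Lemma sum_shift (f : nat -> R) n :
  sum_f_R0 f (S n) = f 0%nat + sum_f_R0 (fun k => f (S k)) n.
Proof.
  induction n.
  - simpl. ring.
  - change (sum_f_R0 f (S (S n))) with (sum_f_R0 f (S n) + f (S (S n))).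
    rewrite IHn. simpl. ring.
Qed.

Lemma sum_rev (f : nat -> R) n :
  sum_f_R0 f n = sum_f_R0 (fun k => f (n - k)%nat) n.
Proof.
  revert f. induction n; intro f.
  - simpl. reflexivity.
  - rewrite sum_shift. rewrite (IHn (fun k => f (S k))).
    simpl. rewrite Nat.sub_diag. rewrite Rplus_comm. f_equal.
    apply sum_eq. intros i Hi. f_equal. destruct i; lia.
Qed.

Lemma sumS (f : nat -> R) n : sum_f_R0 f (S n) = sum_f_R0 f n + f (S n).
Proof. reflexivity. Qed.

Lemma sum_pair (b : nat -> R) n :
  sum_f_R0 b (2 * n + 1) = sum_f_R0 (fun r => b (2 * r)%nat + b (2 * r + 1)%nat) n.
Proof.
  induction n.
  - simpl. reflexivity.
  - replace (2 * S n + 1)%nat with (S (S (2 * n + 1))) by lia. rewrite !sumS.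
    rewrite IHn.
    replace (S (2 * n + 1)) with (2 * S n)%nat by lia.
    replace (S (2 * S n)) with (2 * S n + 1)%nat by lia. ring.
Qed.

Lemma sum_tele (g : nat -> R) n :
  sum_f_R0 (fun r => g r - g (S r)) n = g 0%nat - g (S n).
Proof. induction n; simpl; [ring| rewrite IHn; ring]. Qed.

Lemma sum_zero (f : nat -> R) n : (forall k, (k <= n)%nat -> f k = 0) -> sum_f_R0 f n = 0.
Proof. intro H. rewrite (sum_eq f (fun _ => 0)); auto. rewrite sum_cte. ring. Qed.

Definition Lb (n : nat) : R := sum_f_R0 (fun j => (-1) ^ j / (2 * INR j + 1)) n.

Lemma Lb_ge n : 2/3 <= Lb n.
Proof.
  assert (Hpair : forall k, 2/3 <= Lb (2 * k + 1) /\ 2/3 <= Lb (2 * k)).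
  { induction k.
    - unfold Lb. simpl. split; lra.
    - destruct IHk as [IH1 IH2].
      assert (I2 : INR 2 = 2) by (simpl; ring).
      pose proof (pos_INR k).
      assert (E1 : Lb (2 * S k) = Lb (2 * k + 1) + 1 / (4 * INR k + 5)).
      { unfold Lb. replace (2 * S k)%nat with (S (2 * k + 1)) by lia. rewrite sumS.
        f_equal. replace (S (2 * k + 1)) with (2 * S k)%nat by lia. rewrite pow_1_even.
        rewrite mult_INR, I2, S_INR. f_equal. ring. }
      assert (E2 : Lb (2 * S k + 1) = Lb (2 * S k) - 1 / (4 * INR k + 7)).
      { unfold Lb. replace (2 * S k + 1)%nat with (S (2 * S k)) by lia. rewrite sumS.
        unfold Rminus. f_equal. rewrite pow_1_odd.
        rewrite S_INR, mult_INR, I2, S_INR. field. lra. }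
      pose proof (pos_INR k).
      assert (0 < 1 / (4 * INR k + 5) - 1 / (4 * INR k + 7)).
      { apply Rlt_Rminus. apply Rmult_lt_compat_l; [lra|]. apply Rinv_lt_contravar; nra. }
      assert (0 < 1 / (4 * INR k + 5)) by (apply Rdiv_lt_0_compat; lra).
      split; lra. }
  destruct (Nat.Even_or_Odd n) as [[k ->]|[k ->]]; apply Hpair.
Qed.

Lemma pow_m1_par a b : Nat.Even (a + b) -> (-1) ^ a = (-1) ^ b.
Proof.
  intros [k Hk].
  assert (H1 : (-1) ^ (a + b) = 1) by (rewrite Hk; apply pow_1_even).
  assert (H2 : (-1) ^ b * (-1) ^ b = 1) by (rewrite <- pow_add; replace (b + b)%nat with (2 * b)%nat by lia; apply pow_1_even).
  rewrite pow_add in H1.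
  replace ((-1) ^ a) with ((-1) ^ a * ((-1) ^ b * (-1) ^ b)) by (rewrite H2; ring).
  rewrite <- Rmult_assoc, H1. ring.
Qed.

Lemma I2 : INR 2 = 2. Proof. simpl; ring. Qed.

Lemma Dn_eq H H' : H = S H' -> Nat.Even H ->
  Dn (2 * H) (tn (2 * H)) = INR (2 * H) * (Lb H + Lb H').
Proof.
  intros HH Hev. unfold Dn.
  assert (Hh : 0 < INR H) by (apply lt_0_INR; lia).
  replace (sum_f_R0 _ (2 * H)) with
    (sum_f_R0 (fun k => (-1) ^ k / (tn (2 * H) - node (2 * H) k)) (H + S H'))
    by (f_equal; lia).
  rewrite sum_split, sum_rev. rewrite Rmult_plus_distr_l. unfold Lb.
  rewrite !scal_sum. f_equal.
  - apply sum_eq. intros j Hj.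
    rewrite (pow_m1_par (H - j) j). 2:{ replace (H - j + j)%nat with H by lia. exact Hev. }
    unfold tn, node. rewrite minus_INR by lia. rewrite mult_INR, I2.
    pose proof (pos_INR j). field. split; lra.
  - apply sum_eq. intros l Hl.
    rewrite (pow_m1_par (S H + l) (S l)). 2:{ destruct Hev as [e He].
       exists (e + l + 1)%nat. lia. }
    simpl pow.
    unfold tn, node. rewrite plus_INR, mult_INR, I2, !S_INR.
    pose proof (pos_INR l). field. split; lra.
Qed.

Definition Tt (f : R -> R) (NR : R) (l : nat) : R := f (2 * INR l / NR) / (2 * INR l - 1).

Lemma Nn_eq H H' f : H = S H' -> Nat.Even H -> (forall x, x <= 0 -> f x = 0) ->
  Nn (2 * H) f (tn (2 * H)) = INR (2 * H) * sum_f_R0 (fun l => (-1) ^ l * Tt f (INR (2 * H)) (S l)) H'.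
Proof.
  intros HH Hev Hf. unfold Nn.
  assert (Hh : 0 < INR H) by (apply lt_0_INR; lia).
  replace (sum_f_R0 _ (2 * H)) with
    (sum_f_R0 (fun k => (-1) ^ k * f (node (2 * H) k) / (tn (2 * H) - node (2 * H) k)) (H + S H'))
    by (f_equal; lia).
  rewrite sum_split. rewrite sum_zero.
  2:{ intros k Hk. rewrite Hf. { unfold Rdiv. ring. }
      unfold node. rewrite mult_INR, I2. apply le_INR in Hk.
      apply Rle_minus. apply (ld2 (2 * INR H)); [lra|]. lra. }
  rewrite Rplus_0_l, scal_sum. apply sum_eq. intros l Hl.
  rewrite (pow_m1_par (S H + l) (S l)). 2:{ destruct Hev as [e He].
       exists (e + l + 1)%nat. lia. }
  unfold Tt.
  replace (node (2 * H) (S H + l)) with (2 * INR (S l) / INR (2 * H)).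
  2:{ unfold node. rewrite plus_INR, mult_INR, I2, !S_INR. field. lra. }
  simpl pow. unfold tn. rewrite mult_INR, I2, !S_INR.
  pose proof (pos_INR l). field. split; lra.
Qed.

Lemma key (a d y e1 e2 : R) : 3 <= y -> -e1 <= a <= e1 -> -e2 <= d <= e2 ->
  (a - d) / (y - 2) - 2 * a / y + (a + d) / (y + 2) <= (e1 + e2) * (1 / (y - 2) - 1 / (y + 2)).
Proof.
  intros Hy Ha Hd.
  set (P := 8 / ((y - 2) * y * (y + 2))). set (Q := 4 / ((y - 2) * (y + 2))).
  assert (E : (a - d) / (y - 2) - 2 * a / y + (a + d) / (y + 2) = a * P - d * Q)
    by (unfold P, Q; field; lra).
  assert (EQ : 1 / (y - 2) - 1 / (y + 2) = Q) by (unfold Q; field; lra).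
  rewrite E, EQ.
  assert (HP : 0 <= P) by (unfold P; apply Rlt_le, Rdiv_lt_0_compat; [lra|];
     apply Rmult_lt_0_compat; [apply Rmult_lt_0_compat|]; lra).
  assert (HQP : P <= Q).
  { unfold P, Q. replace (8 / ((y - 2) * y * (y + 2))) with ((8 / y) * (1 / ((y - 2) * (y + 2)))) by (field; lra).
    replace (4 / ((y - 2) * (y + 2))) with (4 * (1 / ((y - 2) * (y + 2)))) by (field; lra).
    apply Rmult_le_compat_r.
    - apply Rlt_le, Rdiv_lt_0_compat; [lra|]. apply Rmult_lt_0_compat; lra.
    - apply (Rmult_le_reg_r y); [lra|]. unfold Rdiv. rewrite Rmult_assoc, Rinv_l by lra. lra. }
  assert (a * P <= e1 * Q) by nra.
  assert (- d * Q <= e2 * Q) by nra.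
  nra.
Qed.

Definition vv (M2 r : nat) : R := 1 / (4 * INR (Nat.max r M2) - 1).

Lemma inwin (mR M2R lR qR : R) : 0 < mR -> 0 < M2R ->
  2 * M2R * qR <= lR <= 2 * M2R * qR + 2 * M2R ->
  qR <= mR * (2 * lR / (4 * mR * M2R)) <= qR + 1.
Proof.
  intros Hm HM [A B].
  replace (mR * (2 * lR / (4 * mR * M2R))) with (lR / (2 * M2R)) by (field; lra).
  split.
  - replace qR with ((2 * M2R * qR) / (2 * M2R)) at 1 by (field; lra). apply divle_m; lra.
  - replace (qR + 1) with ((2 * M2R * qR + 2 * M2R) / (2 * M2R)) by (field; lra). apply divle_m; lra.
Qed.

Lemma per_r m K M2 r : (1 <= M2)%nat -> (1 <= m)%nat -> sqrt (INR m) = 4 * INR K + 8 ->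
  Tt (fm (INR m)) (4 * INR m * INR M2) (2 * r) - 2 * Tt (fm (INR m)) (4 * INR m * INR M2) (2 * r + 1)
  + Tt (fm (INR m)) (4 * INR m * INR M2) (2 * r + 2)
  <= (1 / INR m + 2 / (4 * INR m * INR M2)) * (vv M2 r - vv M2 (S r)).
Proof.
  intros HM2 Hm1 Hs.
  assert (Hm : 0 < INR m) by (apply lt_0_INR; lia).
  assert (HM : 0 < INR M2) by (apply lt_0_INR; lia).
  set (NR := 4 * INR m * INR M2).
  assert (HN : 0 < NR) by (unfold NR; apply Rmult_lt_0_compat; lra).
  destruct (Nat.le_gt_cases (S r) M2) as [Hr|Hr].
  - assert (Tz : forall l, (l <= 2 * M2)%nat -> Tt (fm (INR m)) NR l = 0).
    { intros l Hl. unfold Tt. rewrite (C0a (INR m) K); [unfold Rdiv; ring|assumption|assumption|].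
      apply le_INR in Hl. rewrite mult_INR, I2 in Hl.
      replace (INR m * (2 * INR l / NR)) with (INR l / (2 * INR M2)) by (unfold NR; field; lra).
      replace 1 with ((2 * INR M2) / (2 * INR M2)) by (field; lra). apply divle_m; lra. }
    rewrite !Tz by lia. unfold vv. rewrite !Nat.max_r by lia. lra.
  - set (q := (r / M2)%nat). set (rho := (r mod M2)%nat).
    assert (Hrq : (r = M2 * q + rho)%nat) by (apply Nat.div_mod; lia).
    assert (Hrho : (rho < M2)%nat) by (apply Nat.mod_upper_bound; lia).
    destruct (aff (INR m) K q Hm Hs) as [a [b [Ha Hab]]].
    assert (Win : forall l, (2 * r <= l <= 2 * r + 2)%nat -> fm (INR m) (2 * INR l / NR) = a * (2 * INR l / NR) + b).
    { intros l Hl. apply Hab. unfold NR. apply inwin; [lra|lra|].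
      assert (W1 : (2 * M2 * q <= l)%nat) by nia.
      assert (W2 : (l <= 2 * M2 * q + 2 * M2)%nat) by nia.
      apply le_INR in W1, W2. rewrite !mult_INR, I2 in W1. rewrite plus_INR, !mult_INR, I2 in W2. lra. }
    set (X := INR r).
    assert (HX : 1 <= X) by (unfold X; replace 1 with (INR 1) by reflexivity; apply le_INR; lia).
    assert (E0 : INR (2 * r) = 2 * X) by (rewrite mult_INR, I2; reflexivity).
    assert (E1 : INR (2 * r + 1) = 2 * X + 1) by (rewrite plus_INR, mult_INR, I2; reflexivity).
    assert (E2 : INR (2 * r + 2) = 2 * X + 2) by (rewrite plus_INR, mult_INR, I2; reflexivity).
    set (f1 := fm (INR m) (2 * INR (2 * r + 1) / NR)).
    set (d := a * (2 / NR)).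
    assert (F0 : fm (INR m) (2 * INR (2 * r) / NR) = f1 - d).
    { unfold f1, d. rewrite !Win by lia. rewrite E0, E1. field. lra. }
    assert (F2 : fm (INR m) (2 * INR (2 * r + 2) / NR) = f1 + d).
    { unfold f1, d. rewrite !Win by lia. rewrite E2, E1. field. lra. }
    unfold Tt. rewrite F0, F2. fold f1. rewrite E0, E1, E2.
    unfold vv. rewrite !Nat.max_l by lia. rewrite S_INR. fold X.
    replace (2 * (2 * X) - 1) with ((4 * X + 1) - 2) by ring.
    replace (2 * (2 * X + 1) - 1) with (4 * X + 1) by ring.
    replace (2 * (2 * X + 2) - 1) with ((4 * X + 1) + 2) by ring.
    replace (4 * X - 1) with ((4 * X + 1) - 2) by ring.
    replace (4 * (X + 1) - 1) with ((4 * X + 1) + 2) by ring.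
    replace (2 * (f1 / (4 * X + 1))) with (2 * f1 / (4 * X + 1)) by (field; lra).
    apply key; [lra| |].
    + unfold f1. apply (fm_bound (INR m) K); assumption.
    + unfold d. assert (0 < 2 / NR) by (apply Rdiv_lt_0_compat; lra).
      split; nra.
Qed.

Lemma main_gen m K M2 n : (1 <= M2)%nat -> (4 * K + 5 <= m)%nat -> sqrt (INR m) = 4 * INR K + 8 ->
  (m * M2 = S n)%nat ->
  fm (INR m) (tn (4 * m * M2)) = 0 /\
  Bn (4 * m * M2) (fm (INR m)) (tn (4 * m * M2)) >= - (9 / (8 * INR (4 * m * M2))).
Proof.
  intros HM2 HKm Hs Hn.
  assert (Hm : 0 < INR m) by (apply lt_0_INR; lia).
  assert (HM : 0 < INR M2) by (apply lt_0_INR; lia).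
  assert (HK : 0 <= INR K) by apply pos_INR.
  assert (HM1 : 1 <= INR M2) by (replace 1 with (INR 1) by reflexivity; apply le_INR; lia).
  set (H := (2 * (m * M2))%nat).
  replace (4 * m * M2)%nat with (2 * H)%nat by (unfold H; lia).
  assert (HNR : INR (2 * H) = 4 * INR m * INR M2) by (unfold H; rewrite !mult_INR, I2; ring).
  set (NR := 4 * INR m * INR M2) in *.
  assert (HN : 0 < NR) by (unfold NR; apply Rmult_lt_0_compat; lra).
  assert (HmM : INR m * INR M2 = INR n + 1) by (rewrite <- mult_INR, Hn, S_INR; reflexivity).
  split.
  { unfold tn. rewrite HNR. apply (C0a (INR m) K); auto.
    replace (INR m * (1 / NR)) with (1 / (4 * INR M2)) by (unfold NR; field; lra).
    replace 1 with ((4 * INR M2)/(4 * INR M2)) at 2 by (field; lra). apply divle_m; lra. }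
  unfold Bn. rewrite dec_false.
  2:{ intros [k [Hk Heq]]. unfold tn, node in Heq. rewrite HNR in Heq.
      assert (Heq2 : (2 * INR k / NR - 1) * NR = (1 / NR) * NR) by (rewrite Heq; reflexivity).
      replace ((2 * INR k / NR - 1) * NR) with (2 * INR k - NR) in Heq2 by (field; lra).
      replace (1 / NR * NR) with 1 in Heq2 by (field; lra).
      assert (Heq3 : INR (2 * k) = INR (2 * H + 1)).
      { rewrite plus_INR, HNR, !mult_INR, I2. simpl INR. lra. }
      apply INR_eq in Heq3. lia. }
  assert (HH : H = S (2 * n + 1)) by (unfold H; lia).
  assert (Hev : Nat.Even H) by (exists (m * M2)%nat; reflexivity).
  assert (Hf0 : forall x, x <= 0 -> fm (INR m) x = 0).
  { intros x Hx. apply (C0a (INR m) K); auto. assert (INR m * x <= 0) by nra. lra. }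
  rewrite (Dn_eq H (2 * n + 1)) by assumption.
  rewrite (Nn_eq H (2 * n + 1)) by assumption.
  rewrite HNR.
  set (D := Lb H + Lb (2 * n + 1)).
  assert (HD : 4/3 <= D) by (unfold D; pose proof (Lb_ge H); pose proof (Lb_ge (2 * n + 1)); lra).
  set (T := Tt (fm (INR m)) NR).
  set (E := 1 / INR m + 2 / NR).
  assert (HE : 0 <= E).
  { unfold E. assert (0 < 1 / INR m) by (apply Rdiv_lt_0_compat; lra).
    assert (0 < 2 / NR) by (apply Rdiv_lt_0_compat; lra). lra. }
  set (G := fun r => (1/2) * T (2 * r)%nat - (E/2) * vv M2 r).
  assert (Hsum : sum_f_R0 (fun l => (-1) ^ l * T (S l)) (2 * n + 1) >= G 0%nat - G (S n)).
  { rewrite sum_pair. rewrite <- sum_tele. apply Rle_ge. apply sum_Rle. intros r Hr.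
    rewrite pow_1_even. replace (2 * r + 1)%nat with (S (2 * r)) by lia. rewrite pow_1_odd.
    replace (S (S (2 * r))) with (2 * r + 2)%nat by lia.
    replace (S (2 * r)) with (2 * r + 1)%nat by lia.
    pose proof (per_r m K M2 r HM2 ltac:(lia) Hs) as Hp. fold NR T E in Hp.
    unfold G. replace (2 * S r)%nat with (2 * r + 2)%nat by lia. lra. }
  assert (G0 : G 0%nat = - (E / 2) * (1 / (4 * INR M2 - 1))).
  { unfold G, T, Tt, vv. simpl Nat.max. simpl INR. 
    replace (2 * 0 / NR) with 0 by (field; lra).
    rewrite (C0a (INR m) K 0 Hm Hs) by lra. field. lra. }
  assert (GS : G (S n) <= - (E / 2) * vv M2 (S n)).
  { unfold G, T, Tt. rewrite (C0b (INR m) K).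
    - replace (0 / (2 * INR (2 * S n) - 1)) with 0 by (unfold Rdiv; ring). lra.
    - auto.
    - auto.
    - replace (INR m * (2 * INR (2 * S n) / NR)) with (INR m).
      + apply le_INR in HKm. rewrite plus_INR, mult_INR in HKm. simpl INR in HKm. lra.
      + rewrite mult_INR, I2, S_INR, <- HmM. unfold NR. field. lra. }
  assert (Hv : 0 <= vv M2 (S n)).
  { unfold vv. apply Rlt_le, Rdiv_lt_0_compat; [lra|].
    assert (1 <= INR (Nat.max (S n) M2)) by (replace 1 with (INR 1) by reflexivity; apply le_INR; lia). lra. }
  set (Ssum := sum_f_R0 (fun l => (-1) ^ l * T (S l)) (2 * n + 1)) in *.
  assert (HS1 : Ssum >= - (E / 2) * (1 / (4 * INR M2 - 1))).
  { assert (0 <= (E/2) * vv M2 (S n)) by (apply Rmult_le_pos; lra). lra. }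
  assert (HNv : NR * Ssum >= -1).
  { assert (NR * Ssum >= NR * (- (E / 2) * (1 / (4 * INR M2 - 1)))) by (apply Rle_ge, Rmult_le_compat_l; lra).
    replace (NR * (- (E / 2) * (1 / (4 * INR M2 - 1)))) with (- ((4 * INR M2 + 2) / (2 * (4 * INR M2 - 1)))) in H0
      by (unfold E, NR; field; split; lra).
    assert ((4 * INR M2 + 2) / (2 * (4 * INR M2 - 1)) <= 1).
    { replace 1 with ((2 * (4 * INR M2 - 1)) / (2 * (4 * INR M2 - 1))) at 2 by (field; lra).
      apply divle_m; [lra|]. assert (1 <= INR M2) by (replace 1 with (INR 1) by reflexivity; apply le_INR; lia). lra. }
    lra. }
  set (Nv := NR * Ssum) in *.
  assert (HDpos : 0 < NR * D) by (apply Rmult_lt_0_compat; lra).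
  assert (A1 : -1 / (NR * D) <= Nv / (NR * D)).
  { unfold Rdiv. apply Rmult_le_compat_r; [left; apply Rinv_0_lt_compat; lra | lra]. }
  assert (A2 : / (NR * D) <= / (NR * (4/3))).
  { apply Rinv_le_contravar; [apply Rmult_lt_0_compat; lra|]. apply Rmult_le_compat_l; lra. }
  assert (A3 : -1 / (NR * D) = - / (NR * D)) by (field; lra).
  assert (A4 : - (9 / (8 * NR)) <= - / (NR * (4/3))).
  { replace (/ (NR * (4/3))) with ((3/4) * / NR) by (field; lra).
    replace (9 / (8 * NR)) with ((9/8) * / NR) by (field; lra).
    assert (0 < / NR) by (apply Rinv_0_lt_compat; lra). lra. }
  lra.
Qed.

Theorem lemma1 (i j : nat) (hi : (100 <= i)%nat) (hij : (i < j)%nat) :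
  fm (INR (ni i)) (tn (ni j)) = 0 /\
  Bn (ni j) (fm (INR (ni i))) (tn (ni j)) >= - (9 / (8 * INR (ni j))).
Proof.
  set (a := (2 ^ (i - 1))%nat).
  assert (Hi2 : (2 ^ i = 2 * a)%nat).
  { unfold a. replace i with (S (i - 1)) at 1 by lia. rewrite Nat.pow_succ_r'. reflexivity. }
  assert (Ha3 : (4 <= a)%nat).
  { unfold a. replace 4%nat with (2 ^ 2)%nat by reflexivity. apply Nat.pow_le_mono_r; lia. }
  set (s := (2 ^ a)%nat).
  assert (Hm : (ni i = s * s)%nat).
  { unfold ni, s. rewrite Hi2. replace (2 * a)%nat with (a + a)%nat by lia. apply Nat.pow_add_r. }
  set (c := (2 ^ (a - 3))%nat).
  assert (Hc : (1 <= c)%nat) by (unfold c; apply Nat.le_succ_l, Nat.neq_0_lt_0, Nat.pow_nonzero; lia).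
  assert (Hsc : (s = 8 * c)%nat).
  { unfold s, c. replace a with (3 + (a - 3))%nat at 1 by lia. rewrite Nat.pow_add_r. reflexivity. }
  set (K := (2 * c - 2)%nat).
  assert (HsK : (s = 4 * K + 8)%nat) by (unfold K; lia).
  assert (Hs : sqrt (INR (ni i)) = 4 * INR K + 8).
  { rewrite Hm, mult_INR, sqrt_square by apply pos_INR. rewrite HsK, plus_INR, mult_INR.
    simpl INR. ring. }
  assert (HKm : (4 * K + 5 <= ni i)%nat) by (rewrite Hm; nia).
  assert (Hij2 : (2 * 2 ^ i <= 2 ^ j)%nat).
  { replace j with (i + (j - i))%nat by lia. rewrite Nat.pow_add_r.
    assert (2 <= 2 ^ (j - i))%nat.
    { replace 2%nat with (2 ^ 1)%nat at 1 by reflexivity. apply Nat.pow_le_mono_r; lia. }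
    nia. }
  set (b := (2 ^ j - 2 ^ i - 2)%nat).
  assert (Hpi : (2 <= 2 ^ i)%nat) by lia.
  set (M2 := (2 ^ b)%nat).
  assert (HM2 : (1 <= M2)%nat) by (unfold M2; apply Nat.le_succ_l, Nat.neq_0_lt_0, Nat.pow_nonzero; lia).
  assert (Hj : (ni j = 4 * ni i * M2)%nat).
  { unfold ni at 1. replace (2 ^ j)%nat with (2 ^ i + 2 + b)%nat by (unfold b; lia).
    rewrite !Nat.pow_add_r. unfold M2, ni. simpl (2 ^ 2)%nat. ring. }
  assert (Hpos : (1 <= ni i * M2)%nat) by nia.
  rewrite Hj.
  apply (main_gen (ni i) K M2 (ni i * M2 - 1)); auto. lia.
Qed.
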